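(* Let $\varphi$ be an action of a group $G$ on a strict monoidal category $\mathcal C$, let $g,h,k,\ell\in G$ and $(X,\gamma^g_X)\in\mathcal Z_g(\mathcal C)$, $(Y,\gamma^h_Y)\in\mathcal Z_h(\mathcal C)$. Then: (a) $\varphi_\ell^{-2}(X,Y):\varphi_\ell X\otimes\varphi_\ell Y\to\varphi_\ell(X\otimes Y)$ is a morphism in $\mathcal Z_G(\mathcal C)$ from $\Phi_\ell(X,\gamma^g_X)\odot\Phi_\ell(Y,\gamma^h_Y)$ to $\Phi_\ell((X,\gamma^g_X)\odot(Y,\gamma^h_Y))$; (b) $\varphi_\ell^0:\varphi_\ell(\mathbf 1)\to\mathbf 1$ is a morphism from $\Phi_\ell(\mathbf 1,\mathrm{id})$ to $(\mathbf 1,\mathrm{id})$; (c) $\varphi_{k,\ell,X}:\varphi_k(\varphi_\ell X)\to\varphi_{k\ell}X$ is a morphism from $\Phi_k(\Phi_\ell(X,\gamma^g_X))$ to $\Phi_{k\ell}(X,\gamma^g_X)$; (d) $\gamma^g_{X,Y}:X\otimes Y\to\varphi_g(Y)\otimes X$ is a morphism from $(X,\gamma^g_X)\odot(Y,\gamma^h_Y)$ to $\Phi_g(Y,\gamma^h_Y)\odot(X,\gamma^g_X)$. Here ''morphism in $\mathcal Z_G(\mathcal C)$'' means a morphism in $\mathcal C$ between the underlying objects that commutes with the respective half-braidings (in particular both objects lie in the same component $\mathcal Z_m(\mathcal C)$).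
   Context: All monoidal categories are strict. Comonoidal functor $(F,F^2,F^0)$: $F^0:F\mathbf 1\to\mathbf 1$, $F^2(X,Y):F(X\otimes Y)\to FX\otimes FY$ natural with $(F^2(X,Y)\otimes FZ)F^2(X\otimes Y,Z)=(FX\otimes F^2(Y,Z))F^2(X,Y\otimes Z)$, $(FX\otimes F^0)F^2(X,\mathbf 1)=\mathrm{id}=(F^0\otimes FX)F^2(\mathbf 1,X)$; strong if invertible, $F^{-2}$ the inverse of $F^2$. An action $\varphi$ of $G$ on $\mathcal C$: comonoidal endofunctors $(\varphi_g,\varphi_g^2,\varphi_g^0)$ with $\varphi_e=\mathrm{Id}$, and comonoidal natural isomorphisms $\varphi_{g,h}:\varphi_g\varphi_h\to\varphi_{gh}$ (components $\varphi_{g,h,X}$) with $\varphi_{gh,k,X}\varphi_{g,h,\varphi_kX}=\varphi_{g,hk,X}\varphi_g(\varphi_{h,k,X})$ and $\varphi_{g,e,X}=\mathrm{id}=\varphi_{e,g,X}$; each $\varphi_g$ is then strong comonoidal. Notation: $\varphi_{g_1,\dots,g_n,V}:=\varphi_{g_1\cdots g_{n-1},g_n,V}\circ\varphi_{g_1,\dots,g_{n-1},\varphi_{g_n}V}$ for $n\ge3$. For a morphism $u:A_1\otimes A_2\to B_1\otimes B_2$ write $g.u:=\varphi_g^2(B_1,B_2)\circ\varphi_g(u)\circ\varphi_g^{-2}(A_1,A_2)$. An $F$-half-braiding on $X$ (for a comonoidal endofunctor $F$) is a family of isomorphisms $\gamma_{X,V}:X\otimes V\to FV\otimes X$ natural in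 $V$ with $(F^2(V,W)\otimes X)\gamma_{X,V\otimes W}=(FV\otimes\gamma_{X,W})(\gamma_{X,V}\otimes W)$ and $(F^0\otimes X)\gamma_{X,\mathbf 1}=\mathrm{id}_X$. $\mathcal Z_g(\mathcal C)$ is the category of pairs $(X,\gamma^g_X)$ with $\gamma^g_X$ a $\varphi_g$-half-braiding on $X$, morphisms being morphisms $f$ of $\mathcal C$ with $(\varphi_gV\otimes f)\gamma_{X_1,V}=\gamma_{X_2,V}(f\otimes V)$; $\mathcal Z_G(\mathcal C)=\coprod_g\mathcal Z_g(\mathcal C)$. Product: $(X,\gamma^g_X)\odot(Y,\gamma^h_Y)=(X\otimes Y,\gamma_{X\otimes Y})$ with $\gamma_{X\otimes Y,V}=(\varphi_{g,h,V}\otimes X\otimes Y)(\gamma^g_{X,\varphi_hV}\otimes Y)(X\otimes\gamma^h_{Y,V})$, an object of $\mathcal Z_{gh}(\mathcal C)$. For $\ell\in G$ and $(X,\gamma^h_X)\in\mathcal Z_h(\mathcal C)$, $\Phi_\ell(X,\gamma^h_X):=(\varphi_\ell X,\gamma_{\ell X})$ where $\gamma_{\ell X,V}:=(\varphi_{\ell,h,\ell^{-1},V}\otimes\varphi_\ell X)\circ \ell.(\gamma^h_{X,\varphi_{\ell^{-1}}V})\circ(\varphi_\ell X\otimes\varphi^{-1}_{\ell,\ell^{-1},V}):\varphi_\ell X\otimes V\to\varphi_{\ell h\ell^{-1}}(V)\otimes\varphi_\ell X$; this is a $\varphi_{\ell h\ell^{-1}}$-half-braiding, so $\Phi_\ell(X,\gamma^h_X)\in\mathcal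 Z_{\ell h\ell^{-1}}(\mathcal C)$, and $\Phi_\ell$ acts on morphisms by $f\mapsto\varphi_\ell(f)$. *)

(* Defs.v *)
Set Implicit Arguments.
Unset Strict Implicit.

Record Group := {
  gcar :> Type;
  gmul : gcar -> gcar -> gcar;
  gone : gcar;
  ginv : gcar -> gcar;
  gmulA : forall a b c, gmul a (gmul b c) = gmul (gmul a b) c;
  gmul1l : forall a, gmul gone a = a;
  gmul1r : forall a, gmul a gone = a;
  gmulVl : forall a, gmul (ginv a) a = gone;
  gmulVr : forall a, gmul a (ginv a) = gone
}.
Arguments gmul {g}.
Arguments gone {g}.
Arguments ginv {g}.

(* Category presented by its objects and its (total) type of arrows with
   source/target maps; [comp g f] is "g o f", only meaningful when
   [tgt f = src g]. *)
Record SMCat := {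
  Ob : Type;
  Mor : Type;
  src : Mor -> Ob;
  tgt : Mor -> Ob;
  idm : Ob -> Mor;
  comp : Mor -> Mor -> Mor;
  src_id : forall X, src (idm X) = X;
  tgt_id : forall X, tgt (idm X) = X;
  src_comp : forall g f, tgt f = src g -> src (comp g f) = src f;
  tgt_comp : forall g f, tgt f = src g -> tgt (comp g f) = tgt g;
  comp_id_l : forall f, comp (idm (tgt f)) f = f;
  comp_id_r : forall f, comp f (idm (src f)) = f;
  comp_assoc : forall h g f, tgt f = src g -> tgt g = src h ->
      comp h (comp g f) = comp (comp h g) f;
  tens : Ob -> Ob -> Ob;
  tensM : Mor -> Mor -> Mor;
  unit : Ob;
  src_tens : forall f g, src (tensM f g) = tens (src f) (src g);
  tgt_tens : forall f g, tgt (tensM f g) = tens (tgt f) (tgt g);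
  tens_id : forall X Y, tensM (idm X) (idm Y) = idm (tens X Y);
  tens_comp : forall f f' g g', tgt f = src f' -> tgt g = src g' ->
      tensM (comp f' f) (comp g' g) = comp (tensM f' g') (tensM f g);
  tens_assoc : forall X Y Z, tens (tens X Y) Z = tens X (tens Y Z);
  tensM_assoc : forall f g h, tensM (tensM f g) h = tensM f (tensM g h);
  tens_unit_l : forall X, tens unit X = X;
  tens_unit_r : forall X, tens X unit = X;
  tensM_unit_l : forall f, tensM (idm unit) f = f;
  tensM_unit_r : forall f, tensM f (idm unit) = f
}.
Arguments src {s}. Arguments tgt {s}. Arguments idm {s}. Arguments comp {s}.
Arguments tens {s}. Arguments tensM {s}. Arguments unit {s}.

Section Defs.
Variable C : SMCat.

Definition is_iso (f : Mor C) : Prop :=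
  exists f' : Mor C, src f' = tgt f /\ tgt f' = src f /\
    comp f' f = idm (src f) /\ comp f f' = idm (tgt f).

Record ComonEndo := {
  Fo : Ob C -> Ob C;
  Fm : Mor C -> Mor C;
  F2 : Ob C -> Ob C -> Mor C;
  F0 : Mor C;
  Fsrc : forall f, src (Fm f) = Fo (src f);
  Ftgt : forall f, tgt (Fm f) = Fo (tgt f);
  Fid : forall X, Fm (idm X) = idm (Fo X);
  Fcomp : forall g f, tgt f = src g -> Fm (comp g f) = comp (Fm g) (Fm f);
  F2src : forall X Y, src (F2 X Y) = Fo (tens X Y);
  F2tgt : forall X Y, tgt (F2 X Y) = tens (Fo X) (Fo Y);
  F2nat : forall f g, comp (F2 (tgt f) (tgt g)) (Fm (tensM f g))
                     = comp (tensM (Fm f) (Fm g)) (F2 (src f) (src g));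
  F0src : src F0 = Fo unit;
  F0tgt : tgt F0 = unit;
  F2coassoc : forall X Y Z,
      comp (tensM (F2 X Y) (idm (Fo Z))) (F2 (tens X Y) Z)
    = comp (tensM (idm (Fo X)) (F2 Y Z)) (F2 X (tens Y Z));
  F2counit_r : forall X, comp (tensM (idm (Fo X)) F0) (F2 X unit) = idm (Fo X);
  F2counit_l : forall X, comp (tensM F0 (idm (Fo X))) (F2 unit X) = idm (Fo X)
}.

Definition half_braiding (F : ComonEndo) (X : Ob C) (gam : Ob C -> Mor C) : Prop :=
  (forall V, src (gam V) = tens X V /\ tgt (gam V) = tens (Fo F V) X /\ is_iso (gam V))
  /\ (forall f, comp (tensM (Fm F f) (idm X)) (gam (src f))
              = comp (gam (tgt f)) (tensM (idm X) f))
  /\ (forall V W, comp (tensM (F2 F V W) (idm X)) (gam (tens V W))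
                = comp (tensM (idm (Fo F V)) (gam W)) (tensM (gam V) (idm W)))
  /\ comp (tensM (F0 F) (idm X)) (gam unit) = idm X.

End Defs.

Arguments Fo {C}. Arguments Fm {C}. Arguments F2 {C}. Arguments F0 {C}.

Section Action.
Variables (G : Group) (C : SMCat).

Record Action := {
  act : G -> ComonEndo C;
  (* the inverse of phi_g^2 (phi_g is strong comonoidal) *)
  act2inv : G -> Ob C -> Ob C -> Mor C;
  act2inv_spec : forall g X Y,
      src (act2inv g X Y) = tens (Fo (act g) X) (Fo (act g) Y) /\
      tgt (act2inv g X Y) = Fo (act g) (tens X Y) /\
      comp (act2inv g X Y) (F2 (act g) X Y) = idm (Fo (act g) (tens X Y)) /\
      comp (F2 (act g) X Y) (act2inv g X Y) = idm (tens (Fo (act g) X) (Fo (act g) Y));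
  act_e_o : forall X, Fo (act gone) X = X;
  act_e_m : forall f, Fm (act gone) f = f;
  act_e_2 : forall X Y, F2 (act gone) X Y = idm (tens X Y);
  act_e_0 : F0 (act gone) = idm unit;
  actc : G -> G -> Ob C -> Mor C;
  actcinv : G -> G -> Ob C -> Mor C;
  actc_spec : forall g h X,
      src (actc g h X) = Fo (act g) (Fo (act h) X) /\
      tgt (actc g h X) = Fo (act (gmul g h)) X /\
      src (actcinv g h X) = Fo (act (gmul g h)) X /\
      tgt (actcinv g h X) = Fo (act g) (Fo (act h) X) /\
      comp (actcinv g h X) (actc g h X) = idm (Fo (act g) (Fo (act h) X)) /\
      comp (actc g h X) (actcinv g h X) = idm (Fo (act (gmul g h)) X);
  actc_nat : forall g h f,
      comp (actc g h (tgt f)) (Fm (act g) (Fm (act h) f))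
    = comp (Fm (act (gmul g h)) f) (actc g h (src f));
  actc_comon2 : forall g h X Y,
      comp (tensM (actc g h X) (actc g h Y))
           (comp (F2 (act g) (Fo (act h) X) (Fo (act h) Y)) (Fm (act g) (F2 (act h) X Y)))
    = comp (F2 (act (gmul g h)) X Y) (actc g h (tens X Y));
  actc_comon0 : forall g h,
      comp (F0 (act (gmul g h))) (actc g h unit) = comp (F0 (act g)) (Fm (act g) (F0 (act h)));
  actc_cocycle : forall g h k X,
      comp (actc (gmul g h) k X) (actc g h (Fo (act k) X))
    = comp (actc g (gmul h k) X) (Fm (act g) (actc h k X));
  actc_e_r : forall g X, actc g gone X = idm (Fo (act g) X);
  actc_e_l : forall g X, actc gone g X = idm (Fo (act g) X)
}.

Variable phi : Action.

Notation phio g := (Fo (act phi g)).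
Notation phim g := (Fm (act phi g)).

Definition actc3 (g1 g2 g3 : G) (V : Ob C) : Mor C :=
  comp (actc phi (gmul g1 g2) g3 V) (actc phi g1 g2 (phio g3 V)).

Definition gdot (g : G) (A1 A2 B1 B2 : Ob C) (u : Mor C) : Mor C :=
  comp (F2 (act phi g) B1 B2) (comp (phim g u) (act2inv phi g A1 A2)).

(* Raw objects of Z_G(C): a degree g, an object X and a family gamma_{X,-}.
   Membership in Z_g(C) is the predicate [half_braiding (act phi g) X gamma]. *)
Record ZObj := mkZ { zdeg : G; zob : Ob C; zbr : Ob C -> Mor C }.

Definition inZ (A : ZObj) : Prop := half_braiding (act phi (zdeg A)) (zob A) (zbr A).

Definition Zprod (A B : ZObj) : ZObj :=
  mkZ (gmul (zdeg A) (zdeg B)) (tens (zob A) (zob B))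
    (fun V => comp (tensM (actc phi (zdeg A) (zdeg B) V) (idm (tens (zob A) (zob B))))
               (comp (tensM (zbr A (phio (zdeg B) V)) (idm (zob B)))
                     (tensM (idm (zob A)) (zbr B V)))).

Definition Zact (l : G) (A : ZObj) : ZObj :=
  let h := zdeg A in let X := zob A in
  mkZ (gmul (gmul l h) (ginv l)) (phio l X)
    (fun V =>
       comp (tensM (actc3 l h (ginv l) V) (idm (phio l X)))
         (comp (gdot l X (phio (ginv l) V) (phio h (phio (ginv l) V)) X
                     (zbr A (phio (ginv l) V)))
               (tensM (idm (phio l X)) (actcinv phi l (ginv l) V)))).

Definition Zunit : ZObj := mkZ gone unit (fun V => idm V).

Definition Zhom (A B : ZObj) (f : Mor C) : Prop :=
  zdeg A = zdeg B /\ src f = zob A /\ tgt f = zob B /\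
  forall V, comp (tensM (idm (phio (zdeg A) V)) f) (zbr A V)
          = comp (zbr B V) (tensM f (idm V)).

End Action.

Arguments act {G C}. Arguments act2inv {G C}. Arguments actc {G C}.
Arguments actcinv {G C}.
Arguments mkZ {G C}.

(* Main.v *)
Require Import Defs.
Set Implicit Arguments.

Section GroupL.
Variable G : Group.
Lemma ginv_unique (a b : G) : gmul a b = gone -> b = ginv a.
Proof. intro H. rewrite <- (gmul1l b). rewrite <- (gmulVl a). rewrite <- gmulA. rewrite H. apply gmul1r. Qed.
Lemma ginv_mul (a b : G) : ginv (gmul a b) = gmul (ginv b) (ginv a).
Proof. symmetry. apply ginv_unique. rewrite gmulA. rewrite <- (gmulA a b). rewrite gmulVr, gmul1r. apply gmulVr. Qed.
Lemma ginv_inv (a : G) : ginv (ginv a) = a.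
Proof. symmetry. apply ginv_unique. apply gmulVl. Qed.
Lemma ginv_one : ginv (@gone G) = gone.
Proof. symmetry. apply ginv_unique. apply gmul1l. Qed.
Lemma gmulK (a b : G) : gmul (gmul a b) (ginv b) = a.
Proof. rewrite <- gmulA, gmulVr. apply gmul1r. Qed.
Lemma gmulVK (a b : G) : gmul (gmul a (ginv b)) b = a.
Proof. rewrite <- gmulA, gmulVl. apply gmul1r. Qed.
End GroupL.

Hint Rewrite gmulA gmul1l gmul1r gmulVl gmulVr gmulK gmulVK ginv_mul ginv_inv ginv_one : grprw.
Hint Rewrite tens_assoc tens_unit_l tens_unit_r act_e_o : objrw.

Section Acts.
Variables (G : Group) (C : SMCat) (phi : Action G C).
Lemma actc_src g h X : src (actc phi g h X) = Fo (act phi g) (Fo (act phi h) X).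
Proof. apply (actc_spec phi g h X). Qed.
Lemma actc_tgt g h X : tgt (actc phi g h X) = Fo (act phi (gmul g h)) X.
Proof. apply (actc_spec phi g h X). Qed.
Lemma actcinv_src g h X : src (actcinv phi g h X) = Fo (act phi (gmul g h)) X.
Proof. apply (actc_spec phi g h X). Qed.
Lemma actcinv_tgt g h X : tgt (actcinv phi g h X) = Fo (act phi g) (Fo (act phi h) X).
Proof. apply (actc_spec phi g h X). Qed.
Lemma actc_inv1 g h X : comp (actcinv phi g h X) (actc phi g h X) = idm (Fo (act phi g) (Fo (act phi h) X)).
Proof. apply (actc_spec phi g h X). Qed.
Lemma actc_inv2 g h X : comp (actc phi g h X) (actcinv phi g h X) = idm (Fo (act phi (gmul g h)) X).
Proof. apply (actc_spec phi g h X). Qed.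
Lemma a2i_src g X Y : src (act2inv phi g X Y) = tens (Fo (act phi g) X) (Fo (act phi g) Y).
Proof. apply (act2inv_spec phi g X Y). Qed.
Lemma a2i_tgt g X Y : tgt (act2inv phi g X Y) = Fo (act phi g) (tens X Y).
Proof. apply (act2inv_spec phi g X Y). Qed.
Lemma a2i_inv1 g X Y : comp (act2inv phi g X Y) (F2 (act phi g) X Y) = idm (Fo (act phi g) (tens X Y)).
Proof. apply (act2inv_spec phi g X Y). Qed.
Lemma a2i_inv2 g X Y : comp (F2 (act phi g) X Y) (act2inv phi g X Y) = idm (tens (Fo (act phi g) X) (Fo (act phi g) Y)).
Proof. apply (act2inv_spec phi g X Y). Qed.
Lemma gdot_src l A1 A2 B1 B2 u : src u = tens A1 A2 -> tgt u = tens B1 B2 ->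
  src (gdot phi l A1 A2 B1 B2 u) = tens (Fo (act phi l) A1) (Fo (act phi l) A2).
Proof. intros H1 H2. unfold gdot.
  assert (E1 : tgt (act2inv phi l A1 A2) = src (Fm (act phi l) u)) by (rewrite a2i_tgt, Fsrc; congruence).
  assert (E2 : tgt (comp (Fm (act phi l) u) (act2inv phi l A1 A2)) = src (F2 (act phi l) B1 B2))
    by (rewrite tgt_comp, Ftgt, F2src; congruence).
  rewrite src_comp, src_comp by auto. apply a2i_src. Qed.
Lemma gdot_tgt l A1 A2 B1 B2 u : src u = tens A1 A2 -> tgt u = tens B1 B2 ->
  tgt (gdot phi l A1 A2 B1 B2 u) = tens (Fo (act phi l) B1) (Fo (act phi l) B2).
Proof. intros H1 H2. unfold gdot.
  assert (E1 : tgt (act2inv phi l A1 A2) = src (Fm (act phi l) u)) by (rewrite a2i_tgt, Fsrc; congruence).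
  assert (E2 : tgt (comp (Fm (act phi l) u) (act2inv phi l A1 A2)) = src (F2 (act phi l) B1 B2))
    by (rewrite tgt_comp, Ftgt, F2src; congruence).
  rewrite tgt_comp by auto. apply F2tgt. Qed.
End Acts.

Hint Rewrite src_id tgt_id src_tens tgt_tens Fsrc Ftgt F2src F2tgt F0src F0tgt
  actc_src actc_tgt actcinv_src actcinv_tgt a2i_src a2i_tgt : tyrw.

Ltac ty_solve :=
  repeat (first [ progress (autorewrite with tyrw) | ty_comp | ty_hyp ]);
  autorewrite with grprw objrw; reflexivity
with ty_comp :=
  match goal with
  | |- context [src (comp ?g ?f)] => rewrite (@src_comp _ g f) by ty_solve
  | |- context [tgt (comp ?g ?f)] => rewrite (@tgt_comp _ g f) by ty_solve
  | |- context [src (gdot ?p ?l ?A1 ?A2 ?B1 ?B2 ?u)] => rewrite (@gdot_src _ _ p l A1 A2 B1 B2 u) by ty_solve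
  | |- context [tgt (gdot ?p ?l ?A1 ?A2 ?B1 ?B2 ?u)] => rewrite (@gdot_tgt _ _ p l A1 A2 B1 B2 u) by ty_solve
  end
with ty_hyp :=
  match goal with
  | H : forall V, src (?f V) = _ |- context [src (?f _)] => rewrite H
  | H : forall V, tgt (?f V) = _ |- context [tgt (?f _)] => rewrite H
  | H : src ?x = _ |- context [src ?x] => rewrite H
  | H : tgt ?x = _ |- context [tgt ?x] => rewrite H
  end.

Section CatL.
Variable C : SMCat.
Implicit Types f g h : Mor C.
Lemma comp_idl' f X : tgt f = X -> comp (idm X) f = f.
Proof. intros <-. apply comp_id_l. Qed.
Lemma comp_idr' f X : src f = X -> comp f (idm X) = f.
Proof. intros <-. apply comp_id_r. Qed.
Lemma assocR h g f : tgt f = src g -> tgt g = src h -> comp (comp h g) f = comp h (comp g f).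
Proof. intros. symmetry. apply comp_assoc; auto. Qed.
Lemma tc f f' g g' : tgt f = src f' -> tgt g = src g' ->
  comp (tensM f' g') (tensM f g) = tensM (comp f' f) (comp g' g).
Proof. intros. symmetry. apply tens_comp; auto. Qed.
Lemma rw2 (a b c x : Mor C) : comp a b = c -> tgt b = src a -> tgt x = src b -> comp a (comp b x) = comp c x.
Proof. intros <- ? ?. apply comp_assoc; auto. Qed.
Lemma tensM_idtens X Y f : tensM (idm (tens X Y)) f = tensM (idm X) (tensM (idm Y) f).
Proof. rewrite <- tens_id. apply tensM_assoc. Qed.
Lemma tensM_idtens_r X Y f : tensM f (idm (tens X Y)) = tensM (tensM f (idm X)) (idm Y).
Proof. rewrite <- tens_id. symmetry. apply tensM_assoc. Qed.
Lemma xchg1 f g : tensM f g = comp (tensM f (idm (tgt g))) (tensM (idm (src f)) g).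
Proof. rewrite tc by (rewrite ?tgt_id, ?src_id; auto). rewrite comp_id_r, comp_id_l. auto. Qed.
Lemma xchg2 f g : tensM f g = comp (tensM (idm (tgt f)) g) (tensM f (idm (src g))).
Proof. rewrite tc by (rewrite ?tgt_id, ?src_id; auto). rewrite comp_id_r, comp_id_l. auto. Qed.
End CatL.

Hint Rewrite tensM_assoc tens_id tensM_unit_l tensM_unit_r Fid act_e_m act_e_2 act_e_0 actc_e_l actc_e_r src_id tgt_id : morrw.
Ltac mnorm := repeat (first [ progress (autorewrite with grprw objrw morrw tyrw)
  | match goal with |- context [tensM (idm (tens ?X ?Y)) ?f] =>
      match f with idm _ => fail 1 | _ => rewrite (@tensM_idtens _ X Y f) end end ]).
Ltac rassoc := repeat (rewrite assocR by ty_solve).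
Ltac cid := repeat (first [rewrite comp_idl' by ty_solve | rewrite comp_idr' by ty_solve]).
Section CatL2.
Variable C : SMCat.
Implicit Types f g h x : Mor C.
Lemma tc2 f f' g g' x : tgt f = src f' -> tgt g = src g' -> tgt x = src (tensM f g) ->
  comp (tensM f' g') (comp (tensM f g) x) = comp (tensM (comp f' f) (comp g' g)) x.
Proof. intros. rewrite <- tc by auto. apply comp_assoc; auto. rewrite tgt_tens, src_tens. congruence. Qed.
Lemma split1 f g x : tgt x = tens (src f) (src g) ->
  comp (tensM f g) x = comp (tensM f (idm (tgt g))) (comp (tensM (idm (src f)) g) x).
Proof. intros. rewrite (@xchg1 _ f g). apply assocR. rewrite src_tens, src_id; auto.
  rewrite tgt_tens, src_tens, tgt_id, src_id. auto. Qed.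
Lemma split2 f g x : tgt x = tens (src f) (src g) ->
  comp (tensM f g) x = comp (tensM (idm (tgt f)) g) (comp (tensM f (idm (src g))) x).
Proof. intros. rewrite (@xchg2 _ f g). apply assocR. rewrite src_tens, src_id; auto.
  rewrite tgt_tens, src_tens, tgt_id, src_id. auto. Qed.
End CatL2.
Section CatL3.
Variable C : SMCat.
Implicit Types f g h x : Mor C.
Lemma slide f g x : tgt x = tens (src f) (src g) ->
  comp (tensM (idm (tgt f)) g) (comp (tensM f (idm (src g))) x)
  = comp (tensM f (idm (tgt g))) (comp (tensM (idm (src f)) g) x).
Proof. intro. rewrite <- split2 by auto. rewrite <- split1 by auto. auto. Qed.
Lemma slide_gen f g x X1 X2 Y1 Y2 : src f = X1 -> src g = X2 -> tgt f = Y1 -> tgt g = Y2 -> tgt x = tens X1 X2 ->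
  comp (tensM (idm Y1) g) (comp (tensM f (idm X2)) x)
  = comp (tensM f (idm Y2)) (comp (tensM (idm X1) g) x).
Proof. intros <- <- <- <- ?. apply slide; auto. Qed.
Lemma unit_tens_l f g x : tgt g = unit -> tgt x = tens (src g) (src f) ->
  comp f (comp (tensM g (idm (src f))) x) = comp (tensM g f) x.
Proof. intros H1 H2. rewrite (@split2 _ g f) by auto. rewrite H1, tensM_unit_l. auto. Qed.
Lemma unit_tens_r f g x : tgt g = unit -> tgt x = tens (src f) (src g) ->
  comp f (comp (tensM (idm (src f)) g) x) = comp (tensM f g) x.
Proof. intros H1 H2. rewrite (@split1 _ f g) by auto. rewrite H1, tensM_unit_r. auto. Qed.
End CatL3.
Section CatL4.
Variable C : SMCat.
Implicit Types f g h x : Mor C.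
Lemma unit_absorb_l f g h : tgt g = unit -> tgt h = src f -> comp f (tensM g h) = tensM g (comp f h).
Proof. intros H1 H2. transitivity (comp (tensM (idm unit) f) (tensM g h)). rewrite tensM_unit_l; auto.
 rewrite <- tens_comp; [ rewrite <- H1, comp_id_l; auto | rewrite src_id; auto | auto ]. Qed.
End CatL4.
Section CatL5.
Variable C : SMCat.
Implicit Types f g h x a b : Mor C.
Lemma tcid_l a b X : tgt b = src a -> tensM (comp a b) (idm X) = comp (tensM a (idm X)) (tensM b (idm X)).
Proof. intro. rewrite tc by (rewrite ?src_id, ?tgt_id; auto). rewrite (@comp_idl' _ (idm X) X) by apply tgt_id. auto. Qed.
Lemma tcid_r a b X : tgt b = src a -> tensM (idm X) (comp a b) = comp (tensM (idm X) a) (tensM (idm X) b).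
Proof. intro. rewrite tc by (rewrite ?src_id, ?tgt_id; auto). rewrite (@comp_idl' _ (idm X) X) by apply tgt_id. auto. Qed.
Lemma rw3 (a b c d x : Mor C) : comp a (comp b c) = d -> tgt c = src b -> tgt b = src a -> tgt x = src c ->
  comp a (comp b (comp c x)) = comp d x.
Proof. intros <- ? ? ?. rewrite (@comp_assoc _ b c x) by auto. apply comp_assoc; auto.
 rewrite src_comp; auto. rewrite tgt_comp; auto. Qed.
Lemma rw4 (a b c d e x : Mor C) : comp a (comp b (comp c d)) = e -> tgt d = src c -> tgt c = src b -> tgt b = src a -> tgt x = src d ->
  comp a (comp b (comp c (comp d x))) = comp e x.
Proof. intros <- ? ? ? ?. rewrite (@comp_assoc _ c d x) by auto. apply rw3; auto.
 rewrite tgt_comp; auto. rewrite src_comp; auto. Qed.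
Lemma rw5 (a b c d e r x : Mor C) : comp a (comp b (comp c (comp d e))) = r -> tgt e = src d -> tgt d = src c -> tgt c = src b -> tgt b = src a -> tgt x = src e ->
  comp a (comp b (comp c (comp d (comp e x)))) = comp r x.
Proof. intros <- ? ? ? ? ?. rewrite (@comp_assoc _ d e x) by auto. apply rw4; auto.
 rewrite tgt_comp; auto. rewrite src_comp; auto. Qed.
End CatL5.
Ltac crw E := first [ rewrite E | rewrite (rw2 _ _ _ _ E) by ty_solve
  | rewrite (rw3 _ _ _ _ _ E) by ty_solve | rewrite (rw4 _ _ _ _ _ _ E) by ty_solve | rewrite (rw5 _ _ _ _ _ _ _ E) by ty_solve ]; rassoc.
Ltac crwb E := crw (eq_sym E); rassoc.
Ltac clean := cid; mnorm; cid.
Ltac grp2 a b := rewrite (@comp_assoc _ a b) by ty_solve.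
Ltac insert_id_l L X := rewrite <- (@comp_idl' _ L X) by ty_solve.
Ltac coc p a b c V H := pose proof (actc_cocycle p a b c V) as H;
  autorewrite with grprw objrw morrw in H;
  repeat (first [rewrite comp_idl' in H by ty_solve | rewrite comp_idr' in H by ty_solve]).
Section CatL6.
Variable C : SMCat.
Lemma tsplit_l (a b f : Mor C) : tgt b = src a -> tensM (comp a b) f = comp (tensM a (idm (tgt f))) (tensM b f).
Proof. intro. rewrite tc by (rewrite ?src_id; auto). rewrite comp_id_l. auto. Qed.
Lemma tsplit_r (a b f : Mor C) : tgt b = src a -> tensM f (comp a b) = comp (tensM (idm (tgt f)) a) (tensM f b).
Proof. intro. rewrite tc by (rewrite ?src_id; auto). rewrite comp_id_l. auto. Qed.
End CatL6.
Section CatL7.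
Variable C : SMCat.
Lemma inv_unique (a b m : Mor C) A B : comp b m = idm A -> comp m a = idm B -> tgt a = A -> src b = B ->
  tgt a = src m -> tgt m = src b -> a = b.
Proof. intros H1 H2 H3 H4 H5 H6. rewrite <- (@comp_idl' _ a A) by auto. rewrite <- H1.
  rewrite <- comp_assoc by auto. rewrite H2. apply comp_idr'. auto. Qed.
Lemma slide_end (f g : Mor C) X1 X2 Y1 Y2 : src f = X1 -> src g = X2 -> tgt f = Y1 -> tgt g = Y2 ->
  comp (tensM (idm Y1) g) (tensM f (idm X2)) = comp (tensM f (idm Y2)) (tensM (idm X1) g).
Proof. intros <- <- <- <-. rewrite !tc by (rewrite ?src_id, ?tgt_id; auto).
  rewrite comp_id_l, comp_id_r. rewrite (@comp_idl' _ g (tgt g)), (@comp_idr' _ f (src f)); auto. Qed.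
End CatL7.
Section CatL8.
Variable C : SMCat.
Lemma wcomp (a b : Mor C) X Y : tgt b = src a ->
  tensM (idm X) (tensM (comp a b) (idm Y)) = comp (tensM (idm X) (tensM a (idm Y))) (tensM (idm X) (tensM b (idm Y))).
Proof. intro. rewrite tcid_l by auto. rewrite tcid_r; auto. rewrite tgt_tens, src_tens, tgt_id, src_id. congruence. Qed.
Lemma whisk_assoc (f : Mor C) X Y : tensM (idm X) (tensM f (idm Y)) = tensM (tensM (idm X) f) (idm Y).
Proof. symmetry. apply tensM_assoc. Qed.
Lemma cancel_head (m m' R : Mor C) X A : comp m' m = idm A -> src m = A -> tgt m = src m' -> tgt R = tens X A ->
  comp (tensM (idm X) m') (comp (tensM (idm X) m) R) = R.
Proof. intros H1 H2 H3 H4. rewrite comp_assoc; [ | ty_solve | ty_solve].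
  rewrite tc; [ | ty_solve | ty_solve]. rewrite H1. rewrite (@comp_idl' _ (idm X) X) by ty_solve.
  rewrite tens_id. apply comp_idl'. ty_solve. Qed.
End CatL8.

Section ActL.
Variables (G : Group) (C : SMCat) (phi : Action G C).
Notation phio g := (Fo (act phi g)).
Notation phim g := (Fm (act phi g)).

Lemma a2i_unit_l l W : act2inv phi l unit W = tensM (F0 (act phi l)) (idm (phio l W)).
Proof.
  rewrite <- (@comp_idr' _ (tensM (F0 (act phi l)) (idm (phio l W))) (tens (phio l unit) (phio l W))) by ty_solve.
  rewrite <- a2i_inv2. rewrite comp_assoc by ty_solve. rewrite F2counit_l.
  rewrite comp_idl' by ty_solve. reflexivity.
Qed.
Lemma a2i_unit_r l W : act2inv phi l W unit = tensM (idm (phio l W)) (F0 (act phi l)).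
Proof.
  rewrite <- (@comp_idr' _ (tensM (idm (phio l W)) (F0 (act phi l))) (tens (phio l W) (phio l unit))) by ty_solve.
  rewrite <- a2i_inv2. rewrite comp_assoc by ty_solve. rewrite F2counit_r.
  rewrite comp_idl' by ty_solve. reflexivity.
Qed.
Lemma a2i_nat l f g : comp (act2inv phi l (tgt f) (tgt g)) (tensM (phim l f) (phim l g))
  = comp (phim l (tensM f g)) (act2inv phi l (src f) (src g)).
Proof.
  rewrite <- (@comp_idr' _ (tensM (phim l f) (phim l g)) (tens (phio l (src f)) (phio l (src g)))) by ty_solve.
  rewrite <- a2i_inv2. rewrite (@comp_assoc _ (tensM _ _)) by ty_solve.
  rewrite <- F2nat. rewrite <- assocR by ty_solve. rewrite (@comp_assoc _ (act2inv _ _ _ _)) by ty_solve.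
  rewrite a2i_inv1. rewrite comp_idl' by ty_solve. reflexivity.
Qed.
Lemma actcinv_nat g h f : comp (actcinv phi g h (tgt f)) (phim (gmul g h) f)
  = comp (phim g (phim h f)) (actcinv phi g h (src f)).
Proof.
  rewrite <- (@comp_idr' _ (phim (gmul g h) f) (phio (gmul g h) (src f))) by ty_solve.
  rewrite <- actc_inv2. rewrite (@comp_assoc _ (phim _ f)) by ty_solve.
  rewrite <- actc_nat. rewrite <- assocR by ty_solve. rewrite (@comp_assoc _ (actcinv _ _ _ _)) by ty_solve.
  rewrite actc_inv1. rewrite comp_idl' by ty_solve. reflexivity.
Qed.
End ActL.
Section Gdot.
Variables (G : Group) (C : SMCat) (phi : Action G C).
Notation phio g := (Fo (act phi g)).
Notation phim g := (Fm (act phi g)).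
Lemma gdot_comp l A1 A2 B1 B2 C1 C2 (u v : Mor C) :
  src v = tens A1 A2 -> tgt v = tens B1 B2 -> src u = tens B1 B2 -> tgt u = tens C1 C2 ->
  gdot phi l A1 A2 C1 C2 (comp u v) = comp (gdot phi l B1 B2 C1 C2 u) (gdot phi l A1 A2 B1 B2 v).
Proof.
  intros H1 H2 H3 H4. unfold gdot. rewrite Fcomp by congruence. rassoc.
  rewrite (rw2 _ _ _ _ (a2i_inv1 _ _ _ _)) by ty_solve. cid. reflexivity.
Qed.
Lemma gdot_tens l f g :
  gdot phi l (src f) (src g) (tgt f) (tgt g) (tensM f g) = tensM (phim l f) (phim l g).
Proof.
  unfold gdot. rewrite <- assocR by ty_solve. rewrite F2nat. rassoc.
  rewrite a2i_inv2. cid. reflexivity.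
Qed.
Lemma gdot_tens' l f g A1 A2 B1 B2 : src f = A1 -> src g = A2 -> tgt f = B1 -> tgt g = B2 ->
  gdot phi l A1 A2 B1 B2 (tensM f g) = tensM (phim l f) (phim l g).
Proof. intros <- <- <- <-. apply gdot_tens. Qed.
End Gdot.
Section Coc.
Variables (G : Group) (C : SMCat) (phi : Action G C).
Notation phio g := (Fo (act phi g)).
Notation phim g := (Fm (act phi g)).
Lemma phim_cinvg a g V : phim a (actc phi (ginv g) g V)
  = comp (actc phi (gmul a (ginv g)) g V) (actc phi a (ginv g) (phio g V)).
Proof.
  pose proof (actc_cocycle phi a (ginv g) g V) as E. autorewrite with grprw morrw in E.
  rewrite E. rewrite comp_idl' by ty_solve. reflexivity.
Qed.
Lemma phim_cinvg' g V : phim g (actc phi (ginv g) g V) = actc phi g (ginv g) (phio g V).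
Proof. rewrite phim_cinvg. mnorm. cid. reflexivity. Qed.
End Coc.
Section Coas.
Variables (G : Group) (C : SMCat) (phi : Action G C).
Notation phio g := (Fo (act phi g)).
Notation phim g := (Fm (act phi g)).
Lemma F2alt l X Q Y : F2 (act phi l) (tens X Q) Y =
  comp (tensM (act2inv phi l X Q) (idm (phio l Y)))
    (comp (tensM (idm (phio l X)) (F2 (act phi l) Q Y)) (F2 (act phi l) X (tens Q Y))).
Proof.
  crwb (F2coassoc (act phi l) X Q Y). rewrite tc2 by ty_solve. rewrite a2i_inv1. clean. reflexivity.
Qed.
Lemma a2i_coassoc l X Y Z :
  comp (act2inv phi l (tens X Y) Z) (tensM (act2inv phi l X Y) (idm (phio l Z)))
  = comp (act2inv phi l X (tens Y Z)) (tensM (idm (phio l X)) (act2inv phi l Y Z)).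
Proof.
  apply (@inv_unique _ _ _ (comp (tensM (idm (phio l X)) (F2 (act phi l) Y Z)) (F2 (act phi l) X (tens Y Z)))
     (phio l (tens X (tens Y Z))) (tens (phio l X) (tens (phio l Y) (phio l Z)))); try ty_solve.
  - rassoc. rewrite tc2 by ty_solve. rewrite a2i_inv1. clean. rewrite a2i_inv1. clean. reflexivity.
  - rewrite <- F2coassoc. rassoc. crw (a2i_inv2 phi l (tens X Y) Z). clean.
    rewrite tc by ty_solve. rewrite a2i_inv2. clean. reflexivity.
Qed.
End Coas.
Lemma gdot_def (G : Group) (C : SMCat) (phi : Action G C) l A1 A2 B1 B2 u :
  gdot phi l A1 A2 B1 B2 u = comp (F2 (act phi l) B1 B2) (comp (Fm (act phi l) u) (act2inv phi l A1 A2)).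
Proof. reflexivity. Qed.

Section HB.
Variables (G : Group) (C : SMCat) (phi : Action G C).
Notation phio g := (Fo (act phi g)).
Notation phim g := (Fm (act phi g)).
Variables (g : G) (X : Ob C) (gam : Ob C -> Mor C).
Hypothesis H : half_braiding (act phi g) X gam.
Lemma hb_src V : src (gam V) = tens X V. Proof. apply H. Qed.
Lemma hb_tgt V : tgt (gam V) = tens (phio g V) X. Proof. apply H. Qed.
Lemma hb_nat u A B : src u = A -> tgt u = B ->
  comp (gam B) (tensM (idm X) u) = comp (tensM (phim g u) (idm X)) (gam A).
Proof. intros <- <-. symmetry. apply H. Qed.
Lemma hb_mul V W : comp (tensM (F2 (act phi g) V W) (idm X)) (gam (tens V W))
  = comp (tensM (idm (phio g V)) (gam W)) (tensM (gam V) (idm W)).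
Proof. apply H. Qed.
Lemma hb_unit : comp (tensM (F0 (act phi g)) (idm X)) (gam unit) = idm X.
Proof. apply H. Qed.

Lemma hstar Y V P Q (u : Mor C) : src u = tens Y V -> tgt u = tens P Q ->
  comp (tensM (gdot phi g Y V P Q u) (idm X)) (comp (tensM (idm (phio g Y)) (gam V)) (tensM (gam Y) (idm V)))
  = comp (tensM (idm (phio g P)) (gam Q)) (comp (tensM (gam P) (idm Q)) (tensM (idm X) u)).
Proof.
  intros su tu. pose proof hb_src as Hs. pose proof hb_tgt as Ht.
  crwb (hb_mul P Q). crwb (hb_mul Y V). rassoc.
  rewrite (@hb_nat u (tens Y V) (tens P Q)) by auto.
  unfold gdot. rewrite !tcid_l by ty_solve. rassoc.
  rewrite (@tc2 _ (F2 (act phi g) Y V) (act2inv phi g Y V) (idm X) (idm X)) by ty_solve. rewrite a2i_inv1. cid. mnorm. cid. reflexivity.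
Qed.

Lemma hb_gdot_nat l u A B : src u = A -> tgt u = B ->
  comp (gdot phi l X B (phio g B) X (gam B)) (tensM (idm (phio l X)) (phim l u))
  = comp (tensM (phim l (phim g u)) (idm (phio l X))) (gdot phi l X A (phio g A) X (gam A)).
Proof.
  intros su tu. pose proof hb_src as Hs. pose proof hb_tgt as Ht.
  rewrite <- Fid. rewrite <- (@gdot_tens' _ _ phi l (idm X) u X A X B) by ty_solve.
  rewrite <- (@gdot_tens' _ _ phi l (phim g u) (idm X) (phio g A) X (phio g B) X) by ty_solve.
  rewrite <- !gdot_comp by ty_solve.
  rewrite (@hb_nat u A B) by auto. reflexivity.
Qed.
End HB.

Section K.
Variables (G : Group) (C : SMCat) (phi : Action G C).
Notation phio g := (Fo (act phi g)).
Notation phim g := (Fm (act phi g)).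
Lemma K0 k l A B :
  comp (actc phi k l (tens A B)) (comp (phim k (act2inv phi l A B)) (act2inv phi k (phio l A) (phio l B)))
  = comp (act2inv phi (gmul k l) A B) (tensM (actc phi k l A) (actc phi k l B)).
Proof.
  match goal with |- ?L = _ => insert_id_l L (phio (gmul k l) (tens A B)) end.
  rewrite <- a2i_inv1. rassoc.
  crwb (actc_comon2 phi k l A B). rassoc.
  grp2 (phim k (F2 (act phi l) A B)) (phim k (act2inv phi l A B)).
  rewrite <- Fcomp by ty_solve. rewrite a2i_inv2. mnorm. cid.
  rewrite a2i_inv2. cid. reflexivity.
Qed.
Lemma Kgdot k l A1 A2 P Q (u : Mor C) : src u = tens A1 A2 -> tgt u = tens P Q ->
  comp (tensM (actc phi k l P) (actc phi k l Q))
       (gdot phi k (phio l A1) (phio l A2) (phio l P) (phio l Q) (gdot phi l A1 A2 P Q u))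
  = comp (gdot phi (gmul k l) A1 A2 P Q u) (tensM (actc phi k l A1) (actc phi k l A2)).
Proof.
  intros su tu. unfold gdot. rewrite !Fcomp by ty_solve. rassoc.
  crw (actc_comon2 phi k l P Q).
  pose proof (actc_nat phi k l u) as N. rewrite su, tu in N.
  rassoc. crw N. rassoc. crw (K0 k l A1 A2). rassoc. reflexivity.
Qed.
End K.

Section A12.
Variables (G : Group) (C : SMCat) (phi : Action G C).
Notation phio g := (Fo (act phi g)).
Notation phim g := (Fm (act phi g)).
Lemma A1 l h V :
  comp (actcinv phi l (ginv l) (phio (gmul (gmul l h) (ginv l)) V))
    (comp (actc phi (gmul l h) (ginv l) V) (actc phi l h (phio (ginv l) V)))
  = comp (phim l (actcinv phi (ginv l) (gmul (gmul l h) (ginv l)) V)) (phim l (actc phi h (ginv l) V)).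
Proof.
  match goal with |- _ = ?R => insert_id_l R (phio l (phio (ginv l) (phio (gmul (gmul l h) (ginv l)) V))) end.
  rewrite <- (actc_inv1 phi l (ginv l)). rassoc.
  coc phi l (ginv l) (gmul (gmul l h) (ginv l)) V H. crw H.
  grp2 (phim l (actc phi (ginv l) (gmul (gmul l h) (ginv l)) V)) (phim l (actcinv phi (ginv l) (gmul (gmul l h) (ginv l)) V)).
  rewrite <- Fcomp by ty_solve. rewrite actc_inv2. clean.
  coc phi l h (ginv l) V H2. crwb H2. reflexivity.
Qed.
Lemma A2 l g h V :
  comp (actc phi (gmul (gmul l g) (ginv l)) (gmul (gmul l h) (ginv l)) V)
   (comp (actc phi (gmul l g) (ginv l) (phio (gmul (gmul l h) (ginv l)) V))
    (comp (actc phi l g (phio (ginv l) (phio (gmul (gmul l h) (ginv l)) V)))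
     (comp (phim l (phim g (actcinv phi (ginv l) (gmul (gmul l h) (ginv l)) V)))
       (phim l (phim g (actc phi h (ginv l) V))))))
  = comp (actc phi (gmul (gmul l g) h) (ginv l) V)
     (comp (actc phi l (gmul g h) (phio (ginv l) V)) (phim l (actc phi g h (phio (ginv l) V)))).
Proof.
  pose proof (actc_nat phi l g (actcinv phi (ginv l) (gmul (gmul l h) (ginv l)) V)) as N1.
  autorewrite with tyrw grprw objrw in N1. crw N1.
  pose proof (actc_nat phi l g (actc phi h (ginv l) V)) as N2.
  autorewrite with tyrw grprw objrw in N2. crw N2.
  coc phi (gmul l g) (ginv l) (gmul (gmul l h) (ginv l)) V H. crw H.
  grp2 (phim (gmul l g) (actc phi (ginv l) (gmul (gmul l h) (ginv l)) V)) (phim (gmul l g) (actcinv phi (ginv l) (gmul (gmul l h) (ginv l)) V)).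
  rewrite <- Fcomp by ty_solve. rewrite actc_inv2. clean.
  coc phi (gmul l g) h (ginv l) V H2. crwb H2.
  coc phi l g h (phio (ginv l) V) H3. crw H3. reflexivity.
Qed.
End A12.

Section D.
Variables (G : Group) (C : SMCat) (phi : Action G C).
Notation phio g := (Fo (act phi g)).
Notation phim g := (Fm (act phi g)).
Lemma zact_at_phi g h Y gY V : half_braiding (act phi h) Y gY ->
  comp (tensM (actc phi (gmul (gmul g h) (ginv g)) g V) (idm (phio g Y)))
       (zbr (Zact phi g (mkZ h Y gY)) (phio g V))
  = comp (tensM (actc phi g h V) (idm (phio g Y))) (gdot phi g Y V (phio h V) Y (gY V)).
Proof.
  intro HY. pose proof (hb_src phi h HY) as Hs. pose proof (hb_tgt phi h HY) as Ht.
  unfold Zact, actc3; simpl. mnorm.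
  rewrite tc2 by ty_solve. cid.
  rewrite (rw2 _ _ _ _ (eq_sym (phim_cinvg phi (gmul g h) g V))) by ty_solve.
  pose proof (actc_nat phi g h (actc phi (ginv g) g V)) as N.
  autorewrite with tyrw grprw objrw in N. rewrite <- N.
  rewrite tcid_l by ty_solve. rassoc.
  pose proof (@hb_gdot_nat _ _ phi h _ _ HY g (actc phi (ginv g) g V) (phio (ginv g) (phio g V)) V) as NN.
  specialize (NN ltac:(ty_solve) ltac:(ty_solve)).
  crwb NN. rassoc. rewrite tc by ty_solve. cid. rewrite phim_cinvg'. rewrite actc_inv2. clean. reflexivity.
Qed.
End D.
Section D2.
Variables (G : Group) (C : SMCat) (phi : Action G C).
Notation phio g := (Fo (act phi g)).
Notation phim g := (Fm (act phi g)).
Lemma partd g h X Y gX gY : half_braiding (act phi g) X gX -> half_braiding (act phi h) Y gY ->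
  Zhom phi (Zprod phi (mkZ g X gX) (mkZ h Y gY)) (Zprod phi (Zact phi g (mkZ h Y gY)) (mkZ g X gX)) (gX Y).
Proof.
  intros HX HY. pose proof (hb_src phi h HY) as Hs. pose proof (hb_tgt phi h HY) as Ht.
  pose proof (hb_src phi g HX) as Hs'. pose proof (hb_tgt phi g HX) as Ht'.
  pose proof (fun V => @zact_at_phi _ _ phi g h Y gY V HY) as Z.
  assert (ZbS : forall V, src (zbr (Zact phi g (mkZ h Y gY)) V) = tens (phio g Y) V)
    by (intro V; unfold Zact, actc3, gdot; cbn [zdeg zob zbr]; ty_solve).
  assert (ZbT : forall V, tgt (zbr (Zact phi g (mkZ h Y gY)) V) = tens (phio (gmul (gmul g h) (ginv g)) V) (phio g Y))
    by (intro V; unfold Zact, actc3, gdot; cbn [zdeg zob zbr]; ty_solve).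
  unfold Zhom, Zprod. cbn [zdeg zob zbr].
  change (zdeg (Zact phi g (mkZ h Y gY))) with (gmul (gmul g h) (ginv g)).
  change (zob (Zact phi g (mkZ h Y gY))) with (phio g Y).
  set (Zb := zbr (Zact phi g (mkZ h Y gY))) in *. clearbody Zb.
  split; [autorewrite with grprw; reflexivity|]. split; [apply Hs'|]. split; [apply Ht'|].
  intro V. mnorm. rassoc.
  rewrite (@slide_gen _ (actc phi g h V) (gX Y) _ _ _ _ (tens (phio g Y) X)) by ty_solve.
  rewrite <- (hstar phi g HX Y V (phio h V) Y (gY V) (Hs V) (Ht V)).
  rewrite !tensM_idtens_r. rewrite !tc2 by ty_solve. cid. rewrite (@tc2 _ (Zb (phio g V)) (tensM (actc phi (gmul (gmul g h) (ginv g)) g V) (idm (phio g Y))) (idm X) (idm X)). 2-4: ty_solve. cid. rewrite Z. reflexivity.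
Qed.
End D2.

Section Cc.
Variables (G : Group) (C : SMCat) (phi : Action G C).
Notation phio g := (Fo (act phi g)).
Notation phim g := (Fm (act phi g)).
Lemma cinvT k l V : actcinv phi (gmul k l) (gmul (ginv l) (ginv k)) V =
 comp (phim (gmul k l) (actc phi (ginv l) (ginv k) V))
  (comp (actc phi k l (phio (ginv l) (phio (ginv k) V)))
    (comp (phim k (actcinv phi l (ginv l) (phio (ginv k) V))) (actcinv phi k (ginv k) V))).
Proof.
  match goal with |- _ = ?R => insert_id_l R (phio (gmul k l) (phio (gmul (ginv l) (ginv k)) V)) end.
  rewrite <- actc_inv1. rassoc.
  coc phi (gmul k l) (ginv l) (ginv k) V H1. crwb H1. rassoc.
  coc phi k l (ginv l) (phio (ginv k) V) H2. crw H2.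
  grp2 (phim k (actc phi l (ginv l) (phio (ginv k) V))) (phim k (actcinv phi l (ginv l) (phio (ginv k) V))).
  rewrite <- Fcomp by ty_solve. rewrite actc_inv2. mnorm. cid. rewrite actc_inv2. mnorm. cid. reflexivity.
Qed.
Lemma MT g k l V :
  comp (actc phi (gmul (gmul k l) g) (gmul (ginv l) (ginv k)) V)
   (comp (actc phi (gmul k l) g (phio (gmul (ginv l) (ginv k)) V))
     (phim (gmul k l) (phim g (actc phi (ginv l) (ginv k) V))))
  = comp (actc phi (gmul (gmul (gmul k l) g) (ginv l)) (ginv k) V)
     (comp (actc phi k (gmul (gmul l g) (ginv l)) (phio (ginv k) V))
      (comp (phim k (actc phi (gmul l g) (ginv l) (phio (ginv k) V)))
       (comp (phim k (actc phi l g (phio (ginv l) (phio (ginv k) V))))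
         (actcinv phi k l (phio g (phio (ginv l) (phio (ginv k) V))))))).
Proof.
  match goal with |- ?L = _ => rewrite <- (@comp_idr' _ L (phio (gmul k l) (phio g (phio (ginv l) (phio (ginv k) V))))) by ty_solve end.
  rewrite <- (actc_inv2 phi k l). rassoc.
  pose proof (actc_nat phi (gmul k l) g (actc phi (ginv l) (ginv k) V)) as N.
  autorewrite with tyrw grprw objrw in N. crw N.
  coc phi (gmul (gmul k l) g) (ginv l) (ginv k) V H1. crwb H1.
  coc phi k l g (phio (ginv l) (phio (ginv k) V)) H2. crw H2.
  coc phi k (gmul l g) (ginv l) (phio (ginv k) V) H3. crw H3. reflexivity.
Qed.
Lemma partc g k l X gX : half_braiding (act phi g) X gX ->
  Zhom phi (Zact phi k (Zact phi l (mkZ g X gX))) (Zact phi (gmul k l) (mkZ g X gX)) (actc phi k l X).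
Proof.
  intros HX. pose proof (hb_src phi g HX) as Hs. pose proof (hb_tgt phi g HX) as Ht.
  unfold Zhom, Zact, actc3. cbn [zdeg zob zbr].
  split; [autorewrite with grprw; reflexivity|]. split; [apply actc_src|]. split; [apply actc_tgt|].
  intro V. mnorm.
  pose (U := phio (ginv k) V). pose (W := phio (ginv l) U).
  rewrite (@gdot_comp _ _ phi k _ _ (phio l (phio g W)) (phio l X)) by ty_solve.
  rewrite (@gdot_comp _ _ phi k _ _ (phio l X) (phio l W)) by ty_solve.
  rewrite !gdot_tens' by ty_solve. mnorm. rassoc. unfold W, U in *.
  rewrite (@slide_gen _ _ _ _ _ _ _ (phio (gmul k l) X)) by ty_solve.
  rewrite (@slide_gen _ _ _ _ _ _ _ (phio (gmul k l) X)) by ty_solve.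
  rewrite <- (actc_inv1 phi k l (phio g (phio (ginv l) (phio (ginv k) V)))).
  rewrite (@tsplit_l _ (actcinv phi k l _) (actc phi k l _)) by ty_solve. rassoc.
pose proof (Kgdot phi k l _ _ _ _ _ (Hs (phio (ginv l) (phio (ginv k) V))) (Ht (phio (ginv l) (phio (ginv k) V)))) as KK. crw KK.
  repeat rewrite tc by ty_solve. clean.
  repeat rewrite tc2 by ty_solve. clean.
  rewrite cinvT. rewrite (@tsplit_r _ (phim (gmul k l) _)) by ty_solve. rassoc.
  pose proof (@hb_gdot_nat _ _ phi g _ _ HX (gmul k l) (actc phi (ginv l) (ginv k) V) (phio (ginv l) (phio (ginv k) V)) (phio (gmul (ginv l) (ginv k)) V)) as NN.
  specialize (NN ltac:(ty_solve) ltac:(ty_solve)).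
  mnorm. crw NN. rewrite tc2 by ty_solve. clean. rewrite !Fcomp by ty_solve. rassoc.
  rewrite MT. reflexivity.
Qed.
End Cc.

Lemma partb (G : Group) (C : SMCat) (phi : Action G C) (l : G) :
  Zhom phi (Zact phi l (Zunit G C)) (Zunit G C) (F0 (act phi l)).
Proof.
  unfold Zhom, Zact, Zunit, gdot, actc3; simpl.
  split; [autorewrite with grprw; reflexivity|].
  split; [apply F0src|]. split; [apply F0tgt|].
  intro V. mnorm. cid. rassoc. rewrite a2i_unit_l.
  rewrite (@slide_gen _ _ _ _ _ _ _ unit) by ty_solve.
  rewrite (rw2 _ _ _ _ (F2counit_r _ _)) by ty_solve. cid.
  rewrite tensM_unit_r.
  rewrite tc by ty_solve. cid. rewrite unit_absorb_l by ty_solve. rewrite actc_inv2. mnorm. reflexivity.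
Qed.

Section Pa.
Variables (G : Group) (C : SMCat) (phi : Action G C).
Notation phio g := (Fo (act phi g)).
Notation phim g := (Fm (act phi g)).
Lemma parta g h l X Y gX gY : half_braiding (act phi g) X gX -> half_braiding (act phi h) Y gY ->
  Zhom phi (Zprod phi (Zact phi l (mkZ g X gX)) (Zact phi l (mkZ h Y gY))) (Zact phi l (Zprod phi (mkZ g X gX) (mkZ h Y gY)))
       (act2inv phi l X Y).
Proof.
  intros HX HY. pose proof (hb_src phi h HY) as Hs. pose proof (hb_tgt phi h HY) as Ht.
  pose proof (hb_src phi g HX) as Hs'. pose proof (hb_tgt phi g HX) as Ht'.
  unfold Zhom, Zprod, Zact, actc3. cbn [zdeg zob zbr].
  split; [autorewrite with grprw; reflexivity|]. split; [apply a2i_src|]. split; [apply a2i_tgt|].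
  intro V. mnorm. rewrite !tcid_l by ty_solve. rewrite !tcid_r by ty_solve. mnorm. rassoc.
  pose proof (A1 phi l h V) as EA1.
  assert (EA1' := f_equal (fun m => tensM (idm (phio l X)) (tensM m (idm (phio l Y)))) EA1). cbn beta in EA1'.
  rewrite !wcomp in EA1' by ty_solve. rassoc.
  crw EA1'. rewrite !whisk_assoc.
  rewrite (@tc2 _ (tensM (idm (phio l X)) (phim l (actcinv phi (ginv l) (gmul (gmul l h) (ginv l)) V))) (gdot phi l X _ _ _ _)) by ty_solve.
  rewrite (@tc2 _ (tensM (idm (phio l X)) (phim l (actc phi h (ginv l) V)))) by ty_solve.
  cid.
  pose proof (@hb_gdot_nat _ _ phi g _ _ HX l (actcinv phi (ginv l) (gmul (gmul l h) (ginv l)) V)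
     (phio (gmul h (ginv l)) V) (phio (ginv l) (phio (gmul (gmul l h) (ginv l)) V))) as NN1.
  specialize (NN1 ltac:(ty_solve) ltac:(ty_solve)). crw NN1.
  pose proof (@hb_gdot_nat _ _ phi g _ _ HX l (actc phi h (ginv l) V)
     (phio h (phio (ginv l) V)) (phio (gmul h (ginv l)) V)) as NN2.
  specialize (NN2 ltac:(ty_solve) ltac:(ty_solve)). crw NN2.
  rewrite !tcid_l by ty_solve. rassoc. mnorm.
  pose proof (A2 phi l g h V) as EA2.
  assert (EA2' := f_equal (fun m => tensM m (idm (tens (phio l X) (phio l Y)))) EA2). cbn beta in EA2'.
  rewrite !tcid_l in EA2' by ty_solve. rassoc. crw EA2'.
  match goal with |- _ = ?R => rewrite <- (@cancel_head _ (F2 (act phi l) X Y) (act2inv phi l X Y) R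
     (phio (gmul (gmul (gmul l g) h) (ginv l)) V) (phio l (tens X Y)) (a2i_inv1 phi l X Y)) by ty_solve end.
  f_equal.
  rewrite (@slide_gen _ _ _ _ _ _ _ (tens (phio l X) (phio l Y))) by ty_solve.
  rewrite (@slide_gen _ _ _ _ _ _ _ (tens (phio l X) (phio l Y))) by ty_solve.
  rewrite (gdot_def phi l (tens X Y)). rassoc.
  crwb (F2coassoc (act phi l) (phio (gmul g h) (phio (ginv l) V)) X Y).
  rewrite !Fcomp by ty_solve. rassoc.
  pose proof (F2nat (act phi l) (tensM (actc phi g h (phio (ginv l) V)) (idm X)) (idm Y)) as N1.
  autorewrite with grprw objrw morrw tyrw in N1. crw N1.
  rewrite (@tc2 _ (phim l (tensM (actc phi g h (phio (ginv l) V)) (idm X)))) by ty_solve. cid.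
  pose proof (F2nat (act phi l) (actc phi g h (phio (ginv l) V)) (idm X)) as N2.
  autorewrite with grprw objrw morrw tyrw in N2. rewrite N2.
  pose proof (F2nat (act phi l) (gX (phio h (phio (ginv l) V))) (idm Y)) as N3.
  rewrite Hs', Ht' in N3. autorewrite with grprw objrw morrw tyrw in N3. crw N3.
  rewrite (@tc2 _ (phim l (gX _))) by ty_solve. cid.
  rewrite (F2alt phi l X (phio h (phio (ginv l) V)) Y). rassoc.
  rewrite (@tc2 _ (act2inv phi l X _)) by ty_solve. cid.
  pose proof (F2nat (act phi l) (idm X) (gY (phio (ginv l) V))) as N4.
  rewrite Hs, Ht in N4. autorewrite with grprw objrw morrw tyrw in N4. crw N4.
  rewrite (@tc2 _ (idm _) (idm _) (phim l (gY _))) by ty_solve. cid.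
  rewrite (@slide_end _ (act2inv phi l X Y) (actcinv phi l (ginv l) V) (tens (phio l X) (phio l Y)) _ _ (phio l (phio (ginv l) V))) by ty_solve.
  crw (a2i_coassoc phi l X Y (phio (ginv l) V)). crw (a2i_inv2 phi l X (tens Y (phio (ginv l) V))). clean.
  rewrite <- gdot_def.
  rewrite (@tc2 _ (idm _) (idm _) (act2inv phi l Y _)) by ty_solve. cid.
  rewrite assocR by ty_solve. rewrite <- gdot_def.
  rewrite tcid_l by ty_solve. rassoc. mnorm. reflexivity.
Qed.
End Pa.


Theorem mainTheorem4 (G : Group) (C : SMCat) (phi : Action G C)
    (g h k l : G) (X Y : Ob C) (gX gY : Ob C -> Mor C) :
  half_braiding (act phi g) X gX ->
  half_braiding (act phi h) Y gY ->
  let A := mkZ g X gX in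
  let B := mkZ h Y gY in
  (* (a) *)
  Zhom phi (Zprod phi (Zact phi l A) (Zact phi l B)) (Zact phi l (Zprod phi A B))
       (act2inv phi l X Y)
  (* (b) *)
  /\ Zhom phi (Zact phi l (Zunit G C)) (Zunit G C) (F0 (act phi l))
  (* (c) *)
  /\ Zhom phi (Zact phi k (Zact phi l A)) (Zact phi (gmul k l) A) (actc phi k l X)
  (* (d) *)
  /\ Zhom phi (Zprod phi A B) (Zprod phi (Zact phi g B) A) (gX Y).
Proof.
  intros HX HY A B. subst A B.
  split; [| split; [| split]].
  - apply parta; assumption.
  - apply partb.
  - apply partc; assumption.
  - apply partd; assumption.
Qed.
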